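(* Let $\Bbbk$ be a field of characteristic $\neq 2$ and let $A_1,\dots,A_m\in\Bbbk^{n\times n}$ be symmetric matrices. Fix an integer $t\ge 1$. The map sending an ordered simultaneous block decomposition $(V_1,\dots,V_t)$ of $A_1,\dots,A_m$ to the $t$-tuple $(\epsilon_1,\dots,\epsilon_t)$, where $\epsilon_j\in\Bbbk^{n\times n}$ is the projection of $\Bbbk^n$ onto $V_j$ along $\bigoplus_{l\neq j}V_l$, is a bijection from the set of ordered simultaneous block decompositions of length $t$ of $A_1,\dots,A_m$ onto the set of ordered complete sets of $t$ orthogonal idempotents of $Z(A_1,\dots,A_m)$. In particular, $A_1,\dots,A_m$ admit a simultaneous block diagonalization via congruence with $t$ blocks, i.e. there are $P\in \mathrm{GL}_n(\Bbbk)$ and $n_1,\dots,n_t\ge 1$ with $\sum_j n_j=n$ such that every $P^TA_iP$ is block diagonal with diagonal blocks of sizes $n_1,\dots,n_t$, if and only if $Z(A_1,\dots,A_m)$ contains a complete set of $t$ orthogonal idempotents.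
   Context: The center of symmetric matrices $A_1,\dots,A_m\in\Bbbk^{n\times n}$ is $Z(A_1,\dots,A_m)=\{X\in\Bbbk^{n\times n} : (A_iX)^T=A_iX \text{ for all } 1\le i\le m\}$. An ordered simultaneous block decomposition of length $t$ of $A_1,\dots,A_m$ is a $t$-tuple $(V_1,\dots,V_t)$ of nonzero subspaces of $\Bbbk^n$ with $\Bbbk^n=V_1\oplus\cdots\oplus V_t$ such that $x^TA_iy=0$ for all $i$, all $j\neq l$, all $x\in V_j$, $y\in V_l$ (equivalently, if $P$ is an invertible matrix whose columns are a basis of $V_1$ followed by a basis of $V_2$, etc., then each $P^TA_iP$ is block diagonal with blocks of sizes $\dim V_1,\dots,\dim V_t$). An ordered complete set of $t$ orthogonal idempotents of $Z(A_1,\dots,A_m)$ is a $t$-tuple $(\epsilon_1,\dots,\epsilon_t)$ of nonzero matrices in $Z(A_1,\dots,A_m)$ with $\epsilon_j^2=\epsilon_j$ for all $j$, $\epsilon_j\epsilon_l=0$ for $j\neq l$, and $\sum_j\epsilon_j=I_n$ (matrix products). *)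

(* Defs.v *)
From HB Require Import structures.
From mathcomp Require Import all_boot all_order all_algebra.
Set Implicit Arguments. Unset Strict Implicit. Unset Printing Implicit Defensive.
Import GRing.Theory.
Local Open Scope ring_scope.

Definition in_center (F : fieldType) (n m : nat) (A : 'I_m -> 'M[F]_n)
  (X : 'M[F]_n) : Prop :=
  forall i : 'I_m, (A i *m X)^T = A i *m X.

Definition is_sbd (F : fieldType) (n m t : nat) (A : 'I_m -> 'M[F]_n)
  (V : 'I_t -> {vspace 'cV[F]_n}) : Prop :=
  [/\ forall j, V j != 0%VS,
      directv (\sum_(j < t) V j)%VS,
      (\sum_(j < t) V j)%VS = fullv &
      forall (i : 'I_m) (j l : 'I_t), j != l ->
        forall x y : 'cV[F]_n, x \in V j -> y \in V l ->
          x^T *m A i *m y = 0].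

Definition is_coi (F : fieldType) (n m t : nat) (A : 'I_m -> 'M[F]_n)
  (E : 'I_t -> 'M[F]_n) : Prop :=
  [/\ forall j, in_center A (E j),
      forall j, E j != 0,
      forall j, E j *m E j = E j,
      forall j l, j != l -> E j *m E l = 0 &
      \sum_(j < t) E j = 1%:M].

Definition is_proj_family (F : fieldType) (n t : nat)
  (V : 'I_t -> {vspace 'cV[F]_n}) (E : 'I_t -> 'M[F]_n) : Prop :=
  forall (j l : 'I_t) (v : 'cV[F]_n), v \in V l ->
    E j *m v = (if j == l then v else 0).

Definition in_block (n t : nat) (s : 'I_t -> nat) (j : 'I_t) (a : 'I_n) : bool :=
  ((\sum_(l < t | (l < j)%N) s l)%N <= a)%N &&
  (a < (\sum_(l < t | (l <= j)%N) s l)%N)%N.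

Definition block_diag (F : fieldType) (n t : nat) (s : 'I_t -> nat)
  (M : 'M[F]_n) : Prop :=
  forall (j l : 'I_t), j != l -> forall a b : 'I_n,
    in_block s j a -> in_block s l b -> M a b = 0.

(* Main.v *)
Require Import Defs.
From HB Require Import structures.
From mathcomp Require Import all_boot all_order all_algebra.
From mathcomp Require Import zify.
From Stdlib Require Import FunctionalExtensionality.
Import GRing.Theory.
Local Open Scope ring_scope.
Set Implicit Arguments. Unset Strict Implicit.
Lemma mx_colv_eq (F : fieldType) n (M N : 'M[F]_n) :
  (forall v : 'cV[F]_n, M *m v = N *m v) -> M = N.
Proof.
move=> H; apply/matrixP => a b.
have := congr1 (fun X : 'cV_n => X a 0) (H (delta_mx b 0)).
by rewrite -!colE !mxE.
Qed.

Lemma mx_bil_eq (F : fieldType) n (M N : 'M[F]_n) :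
  (forall x y : 'cV[F]_n, x^T *m M *m y = x^T *m N *m y) -> M = N.
Proof.
move=> H; apply/matrixP => a b.
have := congr1 (fun X : 'M_1 => X 0 0) (H (delta_mx a 0) (delta_mx b 0)).
by rewrite trmx_delta -!rowE -!colE !mxE.
Qed.

Definition matOf (F : fieldType) n (f : 'End('cV[F]_n)) : 'M[F]_n :=
  \matrix_(a, b) (f (delta_mx b 0)) a 0.

Lemma matOfE (F : fieldType) n (f : 'End('cV[F]_n)) v : matOf f *m v = f v.
Proof.
have Dv : v = \sum_b v b 0 *: delta_mx b 0.
  apply/colP => a; rewrite summxE (bigD1 a) //= big1 => [|b /negPf nb].
    by rewrite !mxE !eqxx mulr1 addr0.
  by rewrite !mxE eq_sym nb mulr0.
rewrite {2}Dv linear_sum /=; apply/colP => a.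
rewrite !mxE summxE; apply: eq_bigr => b _.
by rewrite linearZ /= !mxE mulrC.
Qed.

Definition piV (F : fieldType) n t (V : 'I_t -> {vspace 'cV[F]_n}) (j : 'I_t)
  : 'End('cV[F]_n) := sumv_pi (\sum_(l < t) V l)%VS j.

Lemma piV_mem (F : fieldType) n t (V : 'I_t -> {vspace 'cV[F]_n}) j v :
  piV V j v \in V j.
Proof. exact: memv_sum_pi. Qed.

Lemma piV_sum (F : fieldType) n m t (A : 'I_m -> 'M[F]_n)
  (V : 'I_t -> {vspace 'cV[F]_n}) v :
  is_sbd A V -> \sum_j piV V j v = v.
Proof.
case=> _ _ full _; apply: sumv_pi_sum.
by rewrite full memvf.
Qed.

Lemma piV_id (F : fieldType) n m t (A : 'I_m -> 'M[F]_n)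
  (V : 'I_t -> {vspace 'cV[F]_n}) j l v :
  is_sbd A V -> v \in V l -> piV V j v = if j == l then v else 0.
Proof.
move=> hV vl; have [_ dir _ _] := hV.
have := directv_sum_unique (P := xpredT) (Us := V) dir
   (fun j => piV V j v) (fun j => if j == l then v else 0).
move=> /(_ (fun i _ => piV_mem V i v)).
have hv : forall i : 'I_t, true -> (if i == l then v else 0) \in V i.
  by move=> i _; case: eqP => [->|_]; rewrite ?mem0v.
move=> /(_ hv).
rewrite (piV_sum v hV) (bigD1 l) //= eqxx big1 ?addr0 => [|i /negPf -> //].
by rewrite eqxx => /esym/forall_inP/(_ j isT)/eqP.
Qed.

Lemma projE (F : fieldType) n m t (A : 'I_m -> 'M[F]_n)
  (V : 'I_t -> {vspace 'cV[F]_n}) E :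
  is_sbd A V -> is_proj_family V E -> forall j w, E j *m w = piV V j w.
Proof.
move=> hV hE j w; rewrite -{1}(piV_sum w hV) mulmx_sumr.
rewrite (bigD1 j) //= big1 => [|l /negPf nl].
  by rewrite (hE j j) ?piV_mem // eqxx addr0.
by rewrite (hE j l) ?piV_mem // eq_sym nl.
Qed.

Lemma orthL (F : fieldType) n m t (A : 'I_m -> 'M[F]_n)
  (V : 'I_t -> {vspace 'cV[F]_n}) i j x u :
  is_sbd A V -> u \in V j -> x^T *m A i *m u = (piV V j x)^T *m A i *m u.
Proof.
move=> hV uj; have [_ _ _ orth] := hV.
rewrite -{1}(piV_sum x hV) linear_sum /= !mulmx_suml (bigD1 j) //= big1 ?addr0 //.
by move=> l /negPf nl; apply: (orth i l j) => //; rewrite ?nl ?piV_mem.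
Qed.

Lemma orthR (F : fieldType) n m t (A : 'I_m -> 'M[F]_n)
  (V : 'I_t -> {vspace 'cV[F]_n}) i j y u :
  is_sbd A V -> u \in V j -> u^T *m A i *m y = u^T *m A i *m (piV V j y).
Proof.
move=> hV uj; have [_ _ _ orth] := hV.
rewrite -{1}(piV_sum y hV) !mulmx_sumr (bigD1 j) //= big1 ?addr0 //.
by move=> l /negPf nl; apply: (orth i j l) => //; rewrite 1?eq_sym ?nl ?piV_mem.
Qed.

Lemma part1 (F : fieldType) n m (A : 'I_m -> 'M[F]_n)
  (hA : forall i, (A i)^T = A i) t (V : 'I_t -> {vspace 'cV[F]_n}) :
  is_sbd A V ->
     exists E : 'I_t -> 'M[F]_n,
       [/\ is_proj_family V E, is_coi A E &
           forall E', is_proj_family V E' -> E' = E].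
Proof.
move=> hV; pose E j := matOf (piV V j).
have hE : is_proj_family V E.
  by move=> j l v vl; rewrite matOfE (piV_id _ hV vl).
exists E; split => //; last first.
  by move=> E' hE'; apply: functional_extensionality => j; apply: mx_colv_eq => v;
    rewrite (projE hV hE') (projE hV hE).
split.
- move=> j i; apply: mx_bil_eq => x y.
  rewrite trmx_mul hA !mulmxA -trmx_mul -!mulmxA !matOfE mulmxA.
  rewrite (orthR _ _ hV (piV_mem V j x)) -(orthL _ _ hV (piV_mem V j y)).
  by rewrite mulmxA.
- move=> j; have [nz _ _ _] := hV.
  have nv : vpick (V j) != 0 by rewrite vpick0 nz.
  set v := vpick _ in nv.
  apply: contraNneq nv => E0.
  have := matOfE (piV V j) v; rewrite -/(E j) E0 mul0mx.
  by rewrite (piV_id _ hV (memv_pick (V j))) eqxx => ->.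
- move=> j; apply: mx_colv_eq => v; rewrite -mulmxA !matOfE.
  by rewrite (piV_id _ hV (piV_mem V j v)) eqxx.
- move=> j l jl; apply: mx_colv_eq => v; rewrite -mulmxA !matOfE mul0mx.
  by rewrite (piV_id _ hV (piV_mem V l v)) (negPf jl).
- apply: mx_colv_eq => v; rewrite mulmx_suml mul1mx.
  by under eq_bigr => j _ do rewrite matOfE; rewrite (piV_sum v hV).
Qed.

Lemma part2 (F : fieldType) n m (A : 'I_m -> 'M[F]_n) t
  (V V' : 'I_t -> {vspace 'cV[F]_n}) (E : 'I_t -> 'M[F]_n) :
     is_sbd A V -> is_sbd A V' -> is_proj_family V E -> is_proj_family V' E ->
     V = V'.
Proof.
move=> hV hV' hE hE'.
have sub : forall (W W' : 'I_t -> {vspace 'cV[F]_n}), is_sbd A W' ->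
    is_proj_family W E -> is_proj_family W' E -> forall l, (W l <= W' l)%VS.
  move=> W W' hW' hEW hEW' l; apply/subvP => v vl.
  have := hEW l l v vl; rewrite eqxx (projE hW' hEW') => <-.
  exact: piV_mem.
apply: functional_extensionality => l; apply/eqP; rewrite eqEsubv.
by rewrite !sub.
Qed.

Definition imV (F : fieldType) n (M : 'M[F]_n) : {vspace 'cV[F]_n} :=
  limg (linfun (mulmx M) : 'End('cV[F]_n)).

Lemma imV_mem (F : fieldType) n (M : 'M[F]_n) u : M *m u \in imV M.
Proof. by rewrite -(lfunE (mulmx M)) /imV memv_img ?memvf. Qed.

Lemma imVP (F : fieldType) n (M : 'M[F]_n) v :
  v \in imV M -> exists u, v = M *m u.
Proof. by case/memv_imgP => u _ ->; exists u; rewrite lfunE. Qed.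

Lemma part3 (F : fieldType) n m (A : 'I_m -> 'M[F]_n)
  (hA : forall i, (A i)^T = A i) t (E : 'I_t -> 'M[F]_n) :
  is_coi A E ->
  exists V : 'I_t -> {vspace 'cV[F]_n}, is_sbd A V /\ is_proj_family V E.
Proof.
move=> [hcen hnz hid horth hsum].
have memV : forall j v, v \in imV (E j) -> E j *m v = v.
  by move=> j v /imVP [u ->]; rewrite mulmxA hid.
exists (fun j => imV (E j)); split; last first.
  move=> j l v /memV <-; rewrite mulmxA.
  by case: eqP => [->|/eqP jl]; rewrite ?hid ?horth ?mul0mx.
split.
- move=> j; apply: contra_neq (hnz j) => V0; apply: mx_colv_eq => v.
  by have := imV_mem (E j) v; rewrite V0 memv0 mul0mx => /eqP.
- apply/directv_sum_independent => us hus hsum0 i _.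
  have : E i *m \sum_k us k = us i.
    rewrite mulmx_sumr (bigD1 i) //= big1 => [|k ki].
      by rewrite addr0 (memV i _ (hus i isT)).
    by rewrite -(memV k _ (hus k isT)) mulmxA (horth i k) ?mul0mx // eq_sym.
  by rewrite hsum0 mulmx0 => <-.
- apply/eqP; rewrite eqEsubv subvf /=; apply/subvP => v _.
  rewrite -[v]mul1mx -hsum mulmx_suml; apply: memv_sumr => j _.
  exact: imV_mem.
- move=> i j l jl x y /memV <- /memV <-.
  have key : (E j)^T *m A i = A i *m E j by rewrite -{1}hA -trmx_mul hcen.
  rewrite trmx_mul !mulmxA -(mulmxA x^T) key !mulmxA.
  by rewrite -(mulmxA (x^T *m A i)) (horth j l jl) mulmx0 mul0mx.
Qed.
Lemma sum_le_split (t : nat) (s : 'I_t -> nat) (j : 'I_t) :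
  (\sum_(l < t | (l <= j)%N) s l = \sum_(l < t | (l < j)%N) s l + s j)%N.
Proof.
rewrite (bigD1 j) //= addnC; congr (_ + _)%N; apply: eq_bigl => l.
by rewrite ltn_neqAle andbC.
Qed.

Lemma in_blockE t (s : 'I_t -> nat) n (h : (\sum_j s j)%N = n)
  (j : 'I_t) (a : 'I_n) :
  in_block s j a = (j == tagnat.sig1 (cast_ord (esym h) a)).
Proof.
rewrite /in_block sum_le_split.
have -> : nat_of_ord a = nat_of_ord (cast_ord (esym h) a) by [].
move: (cast_ord (esym h) a) => c.
apply/idP/eqP => [/andP[h1 h2] | ->].
  have hk : (c - \sum_(l < t | (l < j)%N) s l < s j)%N by lia.
  have <- := tagnat.Rank1K (Ordinal hk).
  congr tagnat.sig1; apply: ord_inj; rewrite tagnat.RankEsum /= subnKC //.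
have := tagnat.rect c; have := ltn_ord (tagnat.sig2 c).
move: (tagnat.sig2 c) => k; lia.
Qed.

Lemma part4a (F : fieldType) n m (A : 'I_m -> 'M[F]_n)
  (hA : forall i, (A i)^T = A i) t (P : 'M[F]_n) (s : 'I_t -> nat) :
  P \in unitmx -> (forall j, (1 <= s j)%N) -> (\sum_(j < t) s j)%N = n ->
  (forall i, block_diag s (P^T *m A i *m P)) ->
  exists E : 'I_t -> 'M[F]_n, is_coi A E.
Proof.
move=> uP hs h hbd.
pose j0 (a : 'I_n) := tagnat.sig1 (cast_ord (esym h) a).
have inb : forall a, in_block s (j0 a) a by move=> a; rewrite (in_blockE h) eqxx.
pose d (j : 'I_t) : 'rV[F]_n := \row_a ((j == j0 a)%:R).
pose D j := diag_mx (d j).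
pose Q := invmx P.
have QP : Q *m P = 1%:M by rewrite mulVmx.
have PQ : P *m Q = 1%:M by rewrite mulmxV.
have conj_mul : forall X Y, P *m X *m Q *m (P *m Y *m Q) = P *m (X *m Y) *m Q.
  by move=> X Y; rewrite !mulmxA -(mulmxA _ Q P) QP mulmx1.
exists (fun j => P *m D j *m Q); split.
- move=> j i; pose B := P^T *m A i *m P.
  have hAe : A i = Q^T *m B *m Q.
    by rewrite /B !mulmxA -trmx_mul PQ trmx1 mul1mx -mulmxA PQ mulmx1.
  have hBt : B^T = B by rewrite /B !trmx_mul trmxK hA mulmxA.
  have trD : (D j)^T = D j := tr_diag_mx _.
  have hDBg : forall M : 'M[F]_n, block_diag s M -> D j *m M = M *m D j.
    move=> M hM.
    rewrite mul_diag_mx mul_mx_diag; apply/matrixP => a b; rewrite !mxE.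
    case: (eqVneq (j0 a) (j0 b)) => [->|nab]; first by rewrite mulrC.
    have -> : M a b = 0 by apply: (hM (j0 a) (j0 b) nab a b).
    by rewrite mulr0 mul0r.
  have hDB : D j *m B = B *m D j by apply: hDBg; apply: hbd.
  have e1 : Q^T *m B *m Q *m (P *m D j *m Q) = Q^T *m (B *m D j) *m Q.
    by rewrite !mulmxA -(mulmxA _ Q P) QP mulmx1.
  rewrite hAe e1 [(_ *m Q)^T]trmx_mul [(Q^T *m _)^T]trmx_mul [(B *m _)^T]trmx_mul trmxK trD hBt hDB.
  by rewrite !mulmxA.
- move=> j; apply/eqP => E0.
  have D0 : D j = 0.
    have : Q *m (P *m D j *m Q) *m P = 0 by rewrite E0 mulmx0 mul0mx.
    by rewrite !mulmxA QP mul1mx -mulmxA QP mulmx1.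
  have k0 : (0 < s j)%N := hs j.
  pose c := tagnat.Rank j (Ordinal k0).
  pose a := cast_ord h c.
  have ja : j0 a = j by rewrite /j0 /a cast_ordK tagnat.Rank1K.
  have := congr1 (fun M : 'M[F]_n => M a a) D0.
  rewrite /D /d !mxE eqxx ja eqxx /= => /eqP.
  by rewrite oner_eq0.
- move=> j; rewrite conj_mul; congr (_ *m _ *m _).
  rewrite mulmx_diag; congr diag_mx; apply/rowP => a; rewrite !mxE.
  by case: eqP; rewrite ?mulr1 ?mulr0.
- move=> j l jl; rewrite conj_mul.
  suff -> : D j *m D l = 0 by rewrite mulmx0 mul0mx.
  rewrite mulmx_diag.
  have -> : \row_a (d j 0 a * d l 0 a) = 0.
    apply/rowP => a; rewrite !mxE.
    case: (eqVneq j (j0 a)) => [ja|]; last by rewrite mul0r.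
    by rewrite -ja eq_sym (negPf jl) mulr0.
  by rewrite raddf0.
- rewrite -mulmx_suml -mulmx_sumr -raddf_sum.
  have -> : \sum_(j < t) d j = const_mx 1.
    apply/rowP => a; rewrite summxE !mxE.
    under eq_bigr do rewrite mxE.
    by rewrite (bigD1 (j0 a)) //= eqxx big1 ?addr0 // => k /negPf ->.
  change (P *m diag_mx (const_mx 1) *m Q = 1%:M).
  by rewrite diag_const_mx mulmx1 PQ.
Qed.
Lemma entry_rowcol (F : fieldType) p q r (X : 'M[F]_(p, q)) (Y : 'M[F]_(q, r)) a b :
  (X *m Y) a b = (row a X *m col b Y) 0 0.
Proof. by rewrite !mxE; apply: eq_bigr => k _; rewrite !mxE. Qed.

Lemma part4b (F : fieldType) n m (A : 'I_m -> 'M[F]_n)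
  (hA : forall i, (A i)^T = A i) t (E : 'I_t -> 'M[F]_n) :
  is_coi A E ->
  exists P : 'M[F]_n, exists s : 'I_t -> nat,
      [/\ P \in unitmx, (forall j, (1 <= s j)%N), (\sum_(j < t) s j)%N = n &
          forall i, block_diag s (P^T *m A i *m P)].
Proof.
move=> [hcen hnz hid horth hsum].
pose T j := (E j)^T.
have hidT : forall j, T j *m T j = T j by move=> j; rewrite /T -trmx_mul hid.
have horthT : forall j l, j != l -> T l *m T j = 0.
  by move=> j l jl; rewrite /T -trmx_mul horth // trmx0.
have hsumT : \sum_j T j = 1%:M.
  by rewrite -[1%:M]trmx1 -hsum raddf_sum.
have dir : mxdirect (\sum_(j < t) T j)%MS.
  apply/mxdirect_sumsP => i _; apply/eqP; rewrite -submx0; apply/rV_subP => v.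
  rewrite sub_capmx submx0 => /andP[/submxP[w ->] /sub_sumsmxP[u hu]].
  rewrite -(hidT i) mulmxA hu mulmx_suml big1 // => j /andP[_ ji].
  by rewrite -mulmxA (horthT i j) ?mulmx0 // eq_sym.
pose r j := \rank (T j).
have rk : (\sum_j r j)%N = \rank (\sum_(j < t) T j)%MS.
  by move/mxdirectP: dir => ->.
pose W j := row_base (T j).
pose Q := \mxcol_j W j.
have Nle : (\sum_j r j <= n)%N by rewrite rk rank_leq_col.
have WQ : forall j, (W j <= Q)%MS.
  by move=> j; rewrite -(mxcolK W j); exact: rowsub_sub.
have full : row_full Q.
  rewrite -sub1mx -hsumT; apply: summx_sub => j _.
  by apply: submx_trans (WQ j); rewrite eq_row_base.
have hN : (\sum_j r j)%N = n.
  apply/eqP; rewrite eqn_leq Nle /=.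
  by move: full (rank_leq_row Q); rewrite /row_full => /eqP -> hh; exact: hh.
pose C := castmx (hN, erefl n) Q.
exists C^T, r; split => //.
- by rewrite unitmx_tr -row_full_unit row_full_castmx.
- move=> j; rewrite lt0n mxrank_eq0 /T; apply: contra (hnz j) => /eqP.
  by move/(congr1 trmx); rewrite trmxK trmx0 => ->.
- move=> i j l jl a b ina inb.
  have rowC : forall c, row c C = row (cast_ord (esym hN) c) Q.
    by move=> c; apply/rowP => k; rewrite mxE [RHS]mxE /C castmxE cast_ord_id.
  have subC : forall c j', in_block r j' c -> (row c C <= T j')%MS.
    move=> c j'; rewrite (in_blockE hN) => /eqP ->.
    rewrite rowC /Q row_mxcol; apply: submx_trans (row_sub _ _) _.
    by rewrite eq_row_base.
  rewrite trmxK entry_rowcol row_mul -tr_row.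
  have /submxP[x ->] := subC a j ina.
  have /submxP[y ->] := subC b l inb.
  have key : (E j)^T *m A i = A i *m E j by rewrite -{1}hA -trmx_mul hcen.
  rewrite trmx_mul /T trmxK !mulmxA -(mulmxA x) key !mulmxA.
  by rewrite -(mulmxA _ (E j)) (horth j l jl) mulmx0 mul0mx mxE.
Qed.

Unset Implicit Arguments. Set Strict Implicit.

Theorem mainTheorem1 (F : fieldType) (hF : (2 \notin [pchar F])%N)
  (n m : nat) (A : 'I_m -> 'M[F]_n) (hA : forall i, (A i)^T = A i)
  (t : nat) (ht : (1 <= t)%N) :
  (* the map V |-> (projections) is well defined into the idempotent sets *)
  (forall V : 'I_t -> {vspace 'cV[F]_n}, is_sbd A V ->
     exists E : 'I_t -> 'M[F]_n,
       [/\ is_proj_family V E, is_coi A E &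
           forall E', is_proj_family V E' -> E' = E]) /\
  (* injective *)
  (forall (V V' : 'I_t -> {vspace 'cV[F]_n}) (E : 'I_t -> 'M[F]_n),
     is_sbd A V -> is_sbd A V' -> is_proj_family V E -> is_proj_family V' E ->
     V = V') /\
  (* surjective *)
  (forall E : 'I_t -> 'M[F]_n, is_coi A E ->
     exists V : 'I_t -> {vspace 'cV[F]_n}, is_sbd A V /\ is_proj_family V E) /\
  (* in particular *)
  ((exists P : 'M[F]_n, exists s : 'I_t -> nat,
      [/\ P \in unitmx, (forall j, (1 <= s j)%N), (\sum_(j < t) s j)%N = n &
          forall i, block_diag s (P^T *m A i *m P)]) <->
   (exists E : 'I_t -> 'M[F]_n, is_coi A E)).
Proof.
split; first by move=> V hV; apply: part1.
split; first by move=> V V' E hV hV' hE hE'; apply: (part2 hV hV' hE hE').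
split; first by move=> E hE; apply: part3.
split.
  by case=> P [s [uP hs h hbd]]; apply: (part4a hA uP hs h hbd).
by case=> E hE; apply: (part4b hA hE).
Qed.
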